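(* Let $X$ be a Banach space and $\{P_i\}_{i\in I}$ a family of (linear idempotent) projections on $X$. The following are equivalent: (a) $\{P_i\}_{i\in I}$ is uniformly convex, i.e. $\|P_i\|\le 1$ for every $i\in I$, and for every $\varepsilon>0$ there is $\delta(\varepsilon)>0$ such that $\|x-P_ix\|<\varepsilon$ for every $i\in I$ whenever $\|x\|=1$ and $\|x+P_ix\|>2-\delta(\varepsilon)$. (b) For every $\varepsilon>0$ there is $\delta(\varepsilon)>0$ such that $\|x-P_ix\|<\varepsilon$ for every $i\in I$ whenever $x\in B_X$ and $\|x\|-\|P_ix\|<\delta(\varepsilon)$. (c) For every $\varepsilon>0$ there is $\delta(\varepsilon)>0$ such that $\|x-P_ix\|<\varepsilon$ for every $i\in I$ whenever $\|x\|=1$ and $\|P_ix\|>1-\delta(\varepsilon)$. *)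

(* Defs.v *)
From HB Require Import structures.
From mathcomp Require Import all_boot all_order all_algebra.
From mathcomp Require Import all_classical all_reals all_analysis.
Set Implicit Arguments. Unset Strict Implicit. Unset Printing Implicit Defensive.
Import Order.TTheory GRing.Theory Num.Theory.
Import numFieldNormedType.Exports.
Local Open Scope ring_scope.

Definition is_projection (K : numFieldType) (X : normedModType K)
  (P : {linear X -> X}) : Prop := forall x, P (P x) = P x.

Definition unif_convex_family (K : numFieldType) (X : normedModType K)
  (I : Type) (P : I -> {linear X -> X}) : Prop :=
  (forall i x, `|P i x| <= `|x|) /\
  (forall eps : K, 0 < eps -> exists2 delta : K, 0 < delta &
     forall i x, `|x| = 1 -> `|x + P i x| > 2 - delta -> `|x - P i x| < eps).

Definition cond_b (K : numFieldType) (X : normedModType K)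
  (I : Type) (P : I -> {linear X -> X}) : Prop :=
  forall eps : K, 0 < eps -> exists2 delta : K, 0 < delta &
     forall i x, `|x| <= 1 -> `|x| - `|P i x| < delta -> `|x - P i x| < eps.

Definition cond_c (K : numFieldType) (X : normedModType K)
  (I : Type) (P : I -> {linear X -> X}) : Prop :=
  forall eps : K, 0 < eps -> exists2 delta : K, 0 < delta &
     forall i x, `|x| = 1 -> `|P i x| > 1 - delta -> `|x - P i x| < eps.

(* Main.v *)
Require Import Defs.
From HB Require Import structures.
From mathcomp Require Import all_boot all_order all_algebra.
From mathcomp Require Import all_classical all_reals all_analysis.
Import Order.TTheory GRing.Theory Num.Theory.
Import numFieldNormedType.Exports.
Local Open Scope ring_scope.

Lemma c_contr (K : numFieldType) (X : normedModType K)
  (I : Type) (P : I -> {linear X -> X}) :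
  cond_c P -> forall i x, `|P i x| <= `|x|.
Proof.
move=> hc i x; rewrite real_leNgt ?normr_real //; apply/negP => hlt.
have x0 : x != 0.
  apply/negP => /eqP x0; move: hlt; rewrite x0 linear0 normr0 ltxx //.
have nx0 : `|x| != 0 by rewrite normr_eq0.
have a0 : 0 < `|x|^-1 by rewrite invr_gt0 normr_gt0.
set y := `|x|^-1 *: x.
have ny : `|y| = 1 by rewrite /y normrZ gtr0_norm // mulVf.
have nPy : `|P i y| = `|x|^-1 * `|P i x| by rewrite /y linearZ /= normrZ gtr0_norm.
have gt1 : 1 < `|P i y| by rewrite nPy -(mulVf nx0) ltr_pM2l.
have e0 : 0 < `|P i y| - 1 by rewrite subr_gt0.
have [d d0 hd] := hc (`|P i y| - 1) e0.
have h1 : 1 - d < `|P i y|.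
  apply: lt_trans gt1; rewrite ltrBlDr ltrDl //.
have := hd i y ny h1.
have := lerB_dist (P i y) y; rewrite ny distrC => hle hlt2.
by move: (le_lt_trans hle hlt2); rewrite ltxx.
Qed.

Theorem theorem3p5 (K : numFieldType) (X : completeNormedModType K)
  (I : Type) (P : I -> {linear X -> X})
  (hP : forall i, is_projection (P i)) :
  (unif_convex_family P <-> cond_b P) /\ (cond_b P <-> cond_c P).
Proof.
have bc : cond_b P -> cond_c P.
  move=> hb eps e0; have [d d0 hd] := hb eps e0; exists d => // i x nx h.
  apply: hd; first by rewrite nx.
  by rewrite nx ltrBlDr addrC -ltrBlDr.
have cb : cond_c P -> cond_b P.
  move=> hc eps e0; have [d d0 hd] := hc eps e0.
  have e20 : 0 < eps / 2 by rewrite divr_gt0.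
  exists (d * (eps / 2)); first by rewrite mulr_gt0.
  move=> i x nx1 h.
  have := real_leP (gtr0_real e20) (normr_real x); case=> hx; last first.
    apply: le_lt_trans (ler_normB _ _) _.
    have hPx : `|P i x| <= `|x| by apply: c_contr hc i x.
    rewrite [X in _ < X]splitr; apply: (le_lt_trans (lerD (lexx `|x|) hPx)).
    by rewrite ltrD.
  have xpos : 0 < `|x| by apply: lt_le_trans hx.
  have nx0 : `|x| != 0 by rewrite gt_eqF.
  have a0 : 0 < `|x|^-1 by rewrite invr_gt0.
  set y := `|x|^-1 *: x.
  have ny : `|y| = 1 by rewrite /y normrZ gtr0_norm // mulVf.
  have nPy : `|P i y| = `|x|^-1 * `|P i x| by rewrite /y linearZ /= normrZ gtr0_norm.
  have ndy : `|y - P i y| = `|x|^-1 * `|x - P i x|.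
    by rewrite /y linearZ /= -scalerBr normrZ gtr0_norm.
  have h1 : 1 - d < `|P i y|.
    rewrite nPy ltr_pdivlMl // mulrBr mulr1 ltrBlDr.
    move: h; rewrite ltrBlDr => h; apply: lt_le_trans h _.
    by rewrite addrC lerD2l mulrC ler_pM2r.
  have := hd i y ny h1; rewrite ndy => hy.
  have -> : `|x - P i x| = `|x| * (`|x|^-1 * `|x - P i x|).
    by rewrite mulrA mulfV // mul1r.
  by apply: le_lt_trans hy; apply: ler_piMl.
split; last by split.
split.
  move=> [hn hu]; apply: cb => eps e0.
  have [d d0 hd] := hu eps e0.
  exists (d / 2); first by rewrite divr_gt0.
  move=> i x nx h; apply: hd => //.
  apply: lt_le_trans (hn i (x + P i x)).
  rewrite linearD /= hP -mulr2n normrMn -[`|P i x| *+ 2]mulr_natl.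
  have -> : 2 - d = 2 * (1 - d / 2).
    rewrite mulrBr mulr1 [2 * _]mulrC divfK // pnatr_eq0 //.
  by rewrite ltr_pM2l.
move=> hb; have hc := bc hb; split; first exact: c_contr hc.
move=> eps e0; have [d d0 hd] := hc eps e0; exists d => // i x nx h.
apply: hd => //.
have := lt_le_trans h (ler_normD _ _); rewrite nx.
rewrite ltrBlDr => h2; rewrite ltrBlDr.
have e2 : (2 : K) = 1 + 1 by [].
rewrite e2 -addrA ltrD2l in h2.
exact: h2.
Qed.
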